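(* For all $n\ge 0$, $|F_n(321,3142,2143)|=\binom{n}{2}+1$.
   Context: A permutation $\pi$ avoids a classical pattern $p\in S_k$ if no subsequence of $\pi$ of length $k$ is order-isomorphic to $p$. A Fishburn permutation is a permutation $\pi=\pi_1\cdots\pi_n$ of $[n]$ for which there are no indices $i<j$ with $\pi_j<\pi_i<\pi_{i+1}$ and $\pi_i=\pi_j+1$. $F_n(\sigma_1,\dots,\sigma_k)$ denotes the set of Fishburn permutations of length $n$ avoiding each of the classical patterns $\sigma_1,\dots,\sigma_k$ (with $F_0$ containing only the empty permutation). *)

(* Defs.v *)
From mathcomp Require Import all_boot all_order all_fingroup.
Set Implicit Arguments. Unset Strict Implicit. Unset Printing Implicit Defensive.

(* A permutation of [n] is represented as s : 'S_n (permutation of {0..n-1});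
   pi_i (1-based) corresponds to (s (i-1)).+1, order relations are unchanged. *)

Definition fishburn n (s : 'S_n) : bool :=
  ~~ [exists i : 'I_n, exists i1 : 'I_n, exists j : 'I_n,
        [&& val i1 == (val i).+1, val i < val j,
            s j < s i, s i < s i1 & val (s i) == (val (s j)).+1]].

(* Classical pattern p (given as the list of its values in one-line notation,
   e.g. [:: 3;2;1] for 321): s contains p if some strictly increasing choice
   of k = size p positions has values order-isomorphic to p. *)
Definition contains n (s : 'S_n) (p : seq nat) : bool :=
  [exists f : {ffun 'I_(size p) -> 'I_n},
    [forall a : 'I_(size p), forall b : 'I_(size p),
       ((val a < val b) ==> (val (f a) < val (f b))) &&
       ((val (s (f a)) < val (s (f b))) == (nth 0 p a < nth 0 p b))]].

Definition avoids n (s : 'S_n) (p : seq nat) : bool := ~~ contains s p.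

Definition F_321_3142_2143 n : {set 'S_n} :=
  [set s : 'S_n | fishburn s &&
     [&& avoids s [:: 3; 2; 1], avoids s [:: 3; 1; 4; 2]
       & avoids s [:: 2; 1; 4; 3] ] ].

(* Main.v *)
Require Import Defs.
From mathcomp Require Import all_boot all_order all_fingroup zify.
Set Implicit Arguments. Unset Strict Implicit. Unset Printing Implicit Defensive.

Lemma valE n (x : 'I_n) : val x = nat_of_ord x. Proof. by []. Qed.

Lemma sneq n (s : 'S_n) (x y : 'I_n) : (x : nat) <> y -> (s x : nat) <> s y.
Proof. by move=> h e; apply: h; rewrite (perm_inj (val_inj e)). Qed.

Lemma containsP n (s : 'S_n) (p : seq nat) (f : 'I_(size p) -> 'I_n) :
  (forall a b : 'I_(size p), (a : nat) < b -> (f a : nat) < f b) ->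
  (forall a b : 'I_(size p), nth 0 p a < nth 0 p b -> (s (f a) : nat) < s (f b)) ->
  (forall a b : 'I_(size p), nth 0 p a = nth 0 p b -> a = b) -> contains s p.
Proof.
move=> Hf Hs Hu; apply/existsP; exists (finfun f); apply/forallP=> a.
apply/forallP=> b; rewrite !ffunE; apply/andP; split.
  by apply/implyP; exact: Hf.
case: (ltngtP (nth 0 p a) (nth 0 p b)) => h.
- by rewrite Hs.
- by rewrite ltnNge (ltnW (Hs _ _ h)).
- by rewrite (Hu _ _ h) ltnn.
Qed.

Lemma containsE n (s : 'S_n) (p : seq nat) : contains s p ->
  exists f : 'I_(size p) -> 'I_n, forall a b : 'I_(size p),
    ((a : nat) < b -> (f a : nat) < f b) /\
    ((s (f a) : nat) < s (f b) = (nth 0 p a < nth 0 p b)).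
Proof.
move=> /existsP [f /forallP Hf]; exists f => a b.
have /andP [/implyP h1 /eqP h2] := forallP (Hf a) b.
by split.
Qed.

Lemma c321 n (s : 'S_n) (i k j : 'I_n) :
  (i : nat) < k -> (k : nat) < j -> (s j : nat) < s k -> (s k : nat) < s i ->
  contains s [:: 3; 2; 1].
Proof.
move=> ik kj h1 h2.
apply: (@containsP _ s [:: 3; 2; 1] (fun t => nth i [:: i; k; j] t)).
- move=> [[|[|[|?]]] ?] [[|[|[|?]]] ?] //= _; lia.
- move=> [[|[|[|?]]] ?] [[|[|[|?]]] ?] //= _; lia.
- by move=> [[|[|[|?]]] ?] [[|[|[|?]]] ?] //= _; apply: val_inj.
Qed.

Lemma c3142 n (s : 'S_n) (i j k l : 'I_n) :
  (i : nat) < j -> (j : nat) < k -> (k : nat) < l ->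
  (s j : nat) < s l -> (s l : nat) < s i -> (s i : nat) < s k ->
  contains s [:: 3; 1; 4; 2].
Proof.
move=> *.
apply: (@containsP _ s [:: 3; 1; 4; 2] (fun t => nth i [:: i; j; k; l] t)).
- move=> [[|[|[|[|?]]]] ?] [[|[|[|[|?]]]] ?] //= _; lia.
- move=> [[|[|[|[|?]]]] ?] [[|[|[|[|?]]]] ?] //= _; lia.
- by move=> [[|[|[|[|?]]]] ?] [[|[|[|[|?]]]] ?] //= _; apply: val_inj.
Qed.

Lemma c2143 n (s : 'S_n) (i j k l : 'I_n) :
  (i : nat) < j -> (j : nat) < k -> (k : nat) < l ->
  (s j : nat) < s i -> (s i : nat) < s l -> (s l : nat) < s k ->
  contains s [:: 2; 1; 4; 3].
Proof.
move=> *.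
apply: (@containsP _ s [:: 2; 1; 4; 3] (fun t => nth i [:: i; j; k; l] t)).
- move=> [[|[|[|[|?]]]] ?] [[|[|[|[|?]]]] ?] //= _; lia.
- move=> [[|[|[|[|?]]]] ?] [[|[|[|[|?]]]] ?] //= _; lia.
- by move=> [[|[|[|[|?]]]] ?] [[|[|[|[|?]]]] ?] //= _; apply: val_inj.
Qed.

Lemma fishP n (s : 'S_n) (i i1 j : 'I_n) : fishburn s ->
  (i1 : nat) = i.+1 -> (i : nat) < j -> (s j : nat) < s i -> (s i : nat) < s i1 ->
  (s i : nat) = (s j).+1 -> False.
Proof.
move=> /negP fs h1 h2 h3 h4 h5; apply: fs.
apply/existsP; exists i; apply/existsP; exists i1; apply/existsP; exists j.
rewrite !valE h1 h5 eqxx /=. 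
by apply/and4P; split => //; rewrite -h5.
Qed.

Lemma no231 n (s : 'S_n) : fishburn s -> avoids s [:: 3; 2; 1] ->
  avoids s [:: 3; 1; 4; 2] ->
  forall i k j : 'I_n, (i : nat) < k -> (k : nat) < j ->
  (s j : nat) < s i -> (s i : nat) < s k -> False.
Proof.
move=> fs /negP a321 /negP a3142.
suff H : forall m (i k j : 'I_n), (i : nat) = m -> (i : nat) < k -> (k : nat) < j ->
  (s j : nat) < s i -> (s i : nat) < s k -> False.
  by move=> i k j; exact: H.
elim/ltn_ind=> m IH i k j im ik kj sji sik.
have i1lt : i.+1 < n by have := ltn_ord k; lia.
pose i1 : 'I_n := Ordinal i1lt.
have i1E : (i1 : nat) = i.+1 by [].
case: (ltngtP (s i1) (s i)) => h.
- have i1k : (i1 : nat) < k.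
    case: (ltngtP i1 k) => // e; [lia | move/val_inj: e => e; rewrite e in h; lia].
  case: (ltngtP (s i1) (s j)) => h2.
  + by apply: a3142; apply: (@c3142 _ s i i1 k j) => //; lia.
  + by apply: a321; apply: (@c321 _ s i i1 j) => //; lia.
  + by have := @sneq _ s i1 j; lia.
- have sipos : 0 < s i by lia.
  have wlt : (s i).-1 < n by have := ltn_ord (s i); lia.
  pose r := (s^-1)%g (Ordinal wlt).
  have sr : (s r : nat) = (s i).-1 by rewrite /r permKV.
  case: (ltngtP r i) => hr.
  + have := @sneq _ s r j.
    move=> hne; have hrm : (r:nat) < m by lia.
    have hsj : (s j : nat) < s r by lia.
    apply: (IH _ hrm r i j erefl) => //; lia.
  + have := @sneq _ s r i1.
    move=> hne; apply: (@fishP _ s i i1 r fs i1E); lia.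
  + move/val_inj: hr => hr; rewrite hr in sr; lia.
- have := @sneq _ s i1 i; lia.
Qed.

Lemma commonleft n (s : 'S_n) :
  (forall i k j : 'I_n, (i : nat) < k -> (k : nat) < j ->
     (s j : nat) < s i -> (s i : nat) < s k -> False) ->
  avoids s [:: 3; 2; 1] -> avoids s [:: 2; 1; 4; 3] ->
  forall i j k l : 'I_n, (i : nat) < j -> (s j : nat) < s i ->
    (k : nat) < l -> (s l : nat) < s k -> i = k.
Proof.
move=> H231 /negP a321 /negP a2143.
have aux : forall i j k l : 'I_n, (i : nat) < j -> (s j : nat) < s i ->
    (k : nat) < l -> (s l : nat) < s k -> (i : nat) < k -> False.
  move=> i j k l ij sji kl slk ik.
  case: (ltngtP k j) => hkj.
  - case: (ltngtP (s k) (s i)) => h.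
    + by apply: a321; apply: (@c321 _ s i k l) => //; lia.
    + by apply: (H231 i k j) => //.
    + by have := @sneq _ s k i; lia.
  - case: (ltngtP (s l) (s i)) => h.
    + case: (ltngtP (s k) (s i)) => h'.
      * by apply: a321; apply: (@c321 _ s i k l) => //; lia.
      * by apply: (H231 i k l) => //.
      * by have := @sneq _ s k i; lia.
    + by apply: a2143; apply: (@c2143 _ s i j k l) => //; lia.
    + by have := @sneq _ s l i; lia.
  - move/val_inj: hkj => hkj; subst k.
    by apply: a321; apply: (@c321 _ s i j l) => //; lia.
move=> i j k l ij sji kl slk.
case: (ltngtP i k) => h.
- by case: (aux i j k l).
- by case: (aux k l i j).
- exact: val_inj.
Qed.

Lemma inF n (s : 'S_n) :
  (forall i j k l : 'I_n, (i : nat) < j -> (s j : nat) < s i ->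
    (k : nat) < l -> (s l : nat) < s k -> i = k) ->
  (forall i i1 j : 'I_n, (i1 : nat) = i.+1 -> (i : nat) < j ->
    (s j : nat) < s i -> (s i1 : nat) < s i) ->
  s \in F_321_3142_2143 n.
Proof.
move=> H1 H2; rewrite inE; apply/andP; split.
  apply/negP => /existsP [i /existsP [i1 /existsP [j /and5P [h1 h2 h3 h4 h5]]]].
  move: h1 h2; rewrite !valE => /eqP h1 h2.
  have := H2 i i1 j h1 h2 h3; lia.
have invP : forall x y : 'I_n, (x : nat) < y -> ~~ ((s x : nat) < s y) -> (s y : nat) < s x.
  by move=> x y xy; have := @sneq _ s x y; lia.
apply/and3P; split; apply/negP => /containsE [f Hf].
- have [h01 e01] := Hf (@Ordinal 3 0 isT) (@Ordinal 3 1 isT).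
  have [h12 e12] := Hf (@Ordinal 3 1 isT) (@Ordinal 3 2 isT).
  move: e01 e12 => /= /negbT e01 /negbT e12.
  have := H1 _ _ _ _ (h01 isT) (invP _ _ (h01 isT) e01) (h12 isT) (invP _ _ (h12 isT) e12).
  by move=> e; move: (h01 isT); rewrite e ltnn.
- have [h01 e01] := Hf (@Ordinal 4 0 isT) (@Ordinal 4 1 isT).
  have [h23 e23] := Hf (@Ordinal 4 2 isT) (@Ordinal 4 3 isT).
  have [h02 _] := Hf (@Ordinal 4 0 isT) (@Ordinal 4 2 isT).
  move: e01 e23 => /= /negbT e01 /negbT e23.
  have := H1 _ _ _ _ (h01 isT) (invP _ _ (h01 isT) e01) (h23 isT) (invP _ _ (h23 isT) e23).
  by move=> e; move: (h02 isT); rewrite e ltnn.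
- have [h01 e01] := Hf (@Ordinal 4 0 isT) (@Ordinal 4 1 isT).
  have [h23 e23] := Hf (@Ordinal 4 2 isT) (@Ordinal 4 3 isT).
  have [h02 _] := Hf (@Ordinal 4 0 isT) (@Ordinal 4 2 isT).
  move: e01 e23 => /= /negbT e01 /negbT e23.
  have := H1 _ _ _ _ (h01 isT) (invP _ _ (h01 isT) e01) (h23 isT) (invP _ _ (h23 isT) e23).
  by move=> e; move: (h02 isT); rewrite e ltnn.
Qed.

Definition rotv n (a b x : 'I_n) : nat :=
  if ((a : nat) < b) && ((x : nat) == a) then (b : nat)
  else if ((a : nat) < x) && ((x : nat) <= b) then (x : nat).-1 else (x : nat).

Lemma rotv_lt n (a b x : 'I_n) : rotv a b x < n.
Proof.
have := ltn_ord x; have := ltn_ord b; rewrite /rotv; do !case: ifP; lia.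
Qed.

Definition rotf n (a b : 'I_n) (x : 'I_n) : 'I_n := Ordinal (rotv_lt a b x).

Lemma rotf_inj n (a b : 'I_n) : injective (rotf a b).
Proof.
move=> x y /(congr1 val) /=; rewrite /rotv => h; apply: val_inj => /=.
move: h; do !case: ifP; lia.
Qed.

Definition rot n (a b : 'I_n) : 'S_n := perm (@rotf_inj n a b).

Lemma rotE n (a b x : 'I_n) : (rot a b x : nat) = rotv a b x.
Proof. by rewrite permE. Qed.

Section RotProps.
Variables (n : nat) (a b : 'I_n).
Hypothesis ab : (a : nat) < b.

Lemma rot_a : (rot a b a : nat) = b.
Proof. by rewrite rotE /rotv ab eqxx. Qed.

Lemma rot_incr (x y : 'I_n) : (x : nat) <> a -> (y : nat) <> a -> (x : nat) < y ->
  (rot a b x : nat) < rot a b y.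
Proof. rewrite !rotE /rotv; do !case: ifP; lia. Qed.

Lemma rot_inv (i j : 'I_n) : (i : nat) < j -> (rot a b j : nat) < rot a b i -> i = a.
Proof. move=> h1 h2; suff : (i : nat) = a by move/val_inj. move: h1 h2; rewrite !rotE /rotv; do !case: ifP; lia. Qed.

Lemma rot_inF : rot a b \in F_321_3142_2143 n.
Proof.
apply: inF.
  by move=> i j k l h1 h2 h3 h4; rewrite (rot_inv h1 h2) (rot_inv h3 h4).
move=> i i1 j h1 h2 h3; have ia := rot_inv h2 h3; subst i.
move: h1; rewrite !rotE /rotv; do !case: ifP; lia.
Qed.

End RotProps.

Lemma half n (s t : 'S_n) (a x : 'I_n) : s a = t a ->
  (forall x y : 'I_n, (x : nat) <> a -> (y : nat) <> a -> (x : nat) < y -> (t x : nat) < t y) ->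
  (forall y : 'I_n, (y : nat) < x -> s y = t y) -> (x : nat) <> a ->
  (s x : nat) < t x -> False.
Proof.
move=> sta tinc IH xa lt.
pose y := (t^-1)%g (s x).
have ty : t y = s x by rewrite /y permKV.
have ya : (y : nat) <> a.
  move=> e; move/val_inj: e => e; rewrite e -sta in ty.
  by have := @sneq _ s a x; rewrite ty; lia.
case: (ltngtP y x) => h.
- have := IH y h; rewrite ty => e.
  by have := @sneq _ s y x; rewrite e; lia.
- by have := tinc x y xa ya h; rewrite ty; lia.
- by move/val_inj: h => h; rewrite h in ty; rewrite ty ltnn in lt.
Qed.

Lemma uniq_incr n (s t : 'S_n) (a : 'I_n) : s a = t a ->
  (forall x y : 'I_n, (x : nat) <> a -> (y : nat) <> a -> (x : nat) < y -> (s x : nat) < s y) ->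
  (forall x y : 'I_n, (x : nat) <> a -> (y : nat) <> a -> (x : nat) < y -> (t x : nat) < t y) ->
  s = t.
Proof.
move=> sta sinc tinc; apply/permP.
suff H : forall m (x : 'I_n), (x : nat) = m -> s x = t x by move=> x; exact: H.
elim/ltn_ind=> m IH x xm.
have IH' : forall y : 'I_n, (y : nat) < x -> s y = t y.
  by move=> y yx; apply: (IH y) => //; lia.
case: (eqVneq (x : nat) a) => [xa | xa].
  by move/val_inj: xa => ->.
move/eqP: xa => xa.
case: (ltngtP (s x) (t x)) => h.
- by case: (half sta tinc IH' xa h).
- have IH'' : forall y : 'I_n, (y : nat) < x -> t y = s y by move=> y /IH' ->.
  by case: (half (esym sta) sinc IH'' xa h).
- exact: val_inj.
Qed.

Lemma count_iota_min b m : count (fun i => i < b) (iota 0 m) = minn b m.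
Proof.
elim: m => [|m IH]; first by rewrite minn0.
rewrite -addn1 iotaD count_cat /= add0n IH.
case: (ltnP m b) => h /=; lia.
Qed.

Lemma count_iota_lt b m : b <= m -> count (fun i => i < b) (iota 0 m) = b.
Proof. by move=> h; rewrite count_iota_min; lia. Qed.

Lemma cardP n : #|[set p : 'I_n * 'I_n | (p.2 : nat) < p.1]| = 'C(n, 2).
Proof.
rewrite -sum1_card -bin2_sum big_mkord.
rewrite (eq_bigl (fun p : 'I_n * 'I_n => xpredT p.1 && ((p.2 : nat) < p.1))); last first.
  by move=> p; rewrite inE.
rewrite -(pair_big_dep xpredT (fun (b a : 'I_n) => (a : nat) < b) (fun _ _ => 1)) /=.
apply: eq_bigr => b _.
rewrite -(big_mkord (fun a => a < b) (fun _ => 1)) sum1_count.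
by rewrite /index_iota subn0 count_iota_lt // ltnW.
Qed.

Lemma id_inF n : (1%g : 'S_n) \in F_321_3142_2143 n.
Proof.
apply: inF.
  by move=> i j k l h1; rewrite !perm1; lia.
by move=> i i1 j _ h1; rewrite !perm1; lia.
Qed.

Lemma structure n (s : 'S_n) : s \in F_321_3142_2143 n -> s != 1%g ->
  exists a : 'I_n, (a : nat) < s a /\ s = rot a (s a).
Proof.
rewrite inE => /andP [fs /and3P [a321 a3142 a2143]] sn1.
have H231 := no231 fs a321 a3142.
have K := commonleft H231 a321 a2143.
have exP : exists m, [exists x : 'I_n, ((x : nat) == m) && ((s x : nat) != x)].
  case: (pickP (fun x : 'I_n => (s x : nat) != x)) => [x hx | h].
    by exists (nat_of_ord x); apply/existsP; exists x; rewrite eqxx hx.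
  case/eqP: sn1; apply/permP => x; rewrite perm1; apply: val_inj.
  by have := h x; rewrite /= => /negbFE /eqP.
case: (ex_minnP exP) => m /existsP [a /andP [/eqP am sa]] minm.
have fixed : forall y : 'I_n, (y : nat) < a -> (s y : nat) = y.
  move=> y ya; apply/eqP; apply: contraTT ya => hy.
  have := minm y; rewrite -leqNgt am; apply.
  by apply/existsP; exists y; rewrite eqxx hy.
move/eqP: sa => sa.
have asa : (a : nat) < s a.
  case: (ltngtP a (s a)) => [//|h|h]; last by lia.
  have e := fixed (s a) h.
  by have := @sneq _ s (s a) a; rewrite e; lia.
pose p := (s^-1)%g a.
have sp : s p = a by rewrite /p permKV.
have ap : (a : nat) < p.
  case: (ltngtP a p) => [//|hh|hh].
    by have := fixed p hh; rewrite sp; lia.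
  by move/val_inj: hh => hh; rewrite -hh in sp; rewrite sp in sa.
have inv : forall i j : 'I_n, (i : nat) < j -> (s j : nat) < s i -> i = a.
  move=> i j h1 h2; apply: (K i j a p) => //; by rewrite sp.
exists a; split => //.
apply: (uniq_incr (a := a)).
- by apply: val_inj; rewrite /= rotE /rotv asa eqxx.
- move=> x y xa ya xy; case: (ltngtP (s x) (s y)) => // h.
    by have e := inv x y xy h; rewrite e in xa.
  by have := @sneq _ s x y; lia.
- exact: rot_incr.
Qed.

Theorem mainTheorem10 (n : nat) : #|F_321_3142_2143 n| = 'C(n, 2) + 1.
Proof.
set P := [set p : 'I_n * 'I_n | (p.2 : nat) < p.1].
set g := fun p : 'I_n * 'I_n => rot p.2 p.1.
have eqA : F_321_3142_2143 n = 1%g |: (g @: P).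
  apply/setP => s; rewrite in_setU1; apply/idP/idP.
    move=> sF; case: (eqVneq s 1%g) => [-> // | sn1].
    have [a [asa e]] := structure sF sn1.
    apply/orP; right; apply/imsetP; exists (s a, a); first by rewrite inE.
    by rewrite /g /=.
  case/orP => [/eqP -> | /imsetP [p]]; first exact: id_inF.
  by rewrite inE => hp ->; apply: rot_inF.
have n1 : (1%g : 'S_n) \notin g @: P.
  apply/imsetP => [[p]]; rewrite inE => hp e.
  have := congr1 (fun s : 'S_n => (s p.2 : nat)) e.
  by rewrite /= perm1 /g rot_a //; lia.
have ginj : {in P &, injective g}.
  move=> [b a] [b' a']; rewrite !inE /= => h h' e.
  have := congr1 (fun s : 'S_n => (s a : nat)) e.
  rewrite /g /= rot_a // rotE /rotv => E.
  have [e1 e2] : (a : nat) = a' /\ (b : nat) = b' by move: E; do !case: ifP; lia.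
  by rewrite (val_inj e1) (val_inj e2).
rewrite eqA cardsU1 n1 card_in_imset // cardP addnC.
by [].
Qed.
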